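(* Let $G$ be any GP 2 host graph in which every node is marked grey and is not a root and every edge is unmarked, with $n$ nodes and $m$ edges. When the GP 2 program is-connected is executed on $G$ (via the GP 2-to-C compiler, under the cost model below), it terminates in time $\mathrm{O}(n+m)$, i.e. linear in the size of $G$.
   Context: GP 2 semantics. Host graphs are finite directed graphs (parallel edges and loops allowed); every node and edge carries a label (a list of integers and strings) and a mark: nodes are unmarked or red, green, blue or grey; edges are unmarked or red, green, blue or dashed. Some nodes are roots. A rule consists of a left-hand graph $L$ and a right-hand graph $R$ sharing an interface of nodes; labels may contain variables; a rule item with mark ''any'' matches any mark. A rule is applied by finding an injective morphism from $L$ into the host graph compatible with labels and marks, mapping roots of $L$ to roots, satisfying the dangling condition and the rule's condition, then modifying the matched items as prescribed by $R$. Commands: a rule set call applies one applicable rule and fails if none applies; $P;Q$ is sequencing; $P!$ iterates $P$ until it fails (returning the graph on which $P$ was last entered; break exits the loop); ''try $C$ then $P$ else $Q$'' runs $C$ and continues with $P$ on its result if it succeeded, else runs $Q$ on the original graph; ''if $C$ then $P$ else $Q$'' runs $C$ on a copy then $P$ or $Q$ on the original; fail causes failure. Cost model (updated GP 2-to-C compiler). The generated code stores host nodes in separate linked lists per node mark, keeps a list of roots, and for each node stores a two-dimensional array of linked lists of incident edges indexed by edge mark (unmarked, dashed, red, green, blue) and orientation (incoming, outgoing, loop). Each of the following elementary operations takes constant time: fetch the first/next host node with a given mark; fetch the first/next root node; given a node, fetch the first/next incoming, outgoing or loop edge with a given mark; read in-degree, out-degree, mark, root status, source, target; set/clear/test a ''matched''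 flag. Rule matching is a search using these operations; once a match is found, completing a rule application (for rules that only change marks, roots or add host labels) takes constant time. Running time is the total cost of all operations performed; the size of $G$ is $n+m$. The program is-connected (variables x,y,z of type list; labels unchanged by all rules): Main = try init then (DFS!; Check); DFS = FORWARD!; try back else break; FORWARD = next_edge; {move, ignore}; Check = if match then fail. Rule edges between nodes 1 and 2 match host edges in either direction. - init: a grey non-root node becomes a blue root. - match: a grey node; no change. - next_edge: blue root 1, node 2 of any mark, unmarked edge between them; edge becomes red. - ignore: blue root 1, blue node 2, red edge between; edge becomes blue. - move: blue root 1, grey node 2, red edge between; node 1 becomes a blue non-root, node 2 a blue root, edge dashed. - back: blue non-root 1, blue root 2, dashed edge between; node 1 becomes a root, node 2 a non-root (both blue), edge blue. *)

(* Defs.v *)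
From mathcomp Require Import all_boot.
From Stdlib Require ZArith String.

Set Implicit Arguments.
Unset Strict Implicit.
Unset Printing Implicit Defensive.

Inductive atom := AInt (z : BinNums.Z) | AStr (s : String.string).
Definition label := list atom.

Inductive nmark := NUnmarked | NRed | NGreen | NBlue | NGrey.
Inductive emark := EUnmarked | EDashed | ERed | EGreen | EBlue.

Definition nmark_eqb (a b : nmark) : bool :=
  match a, b with
  | NUnmarked, NUnmarked | NRed, NRed | NGreen, NGreen
  | NBlue, NBlue | NGrey, NGrey => true
  | _, _ => false
  end.
Definition emark_eqb (a b : emark) : bool :=
  match a, b with
  | EUnmarked, EUnmarked | EDashed, EDashed | ERed, ERed
  | EGreen, EGreen | EBlue, EBlue => true
  | _, _ => false
  end.

Record hnode := HNode { nmk : nmark; nroot : bool; nlab : label }.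
Record hedge := HEdge { esrc : nat; etgt : nat; emk : emark; elab : label }.

(* Nodes are 0 .. size hnodes - 1, edges are 0 .. size hedges - 1.
   Parallel edges and loops are allowed. *)
Record hgraph := HGraph { hnodes : seq hnode; hedges : seq hedge }.

Definition dnode := HNode NUnmarked false nil.
Definition dedge := HEdge 0 0 EUnmarked nil.
Definition nd (G : hgraph) (v : nat) : hnode := nth dnode (hnodes G) v.
Definition ed (G : hgraph) (e : nat) : hedge := nth dedge (hedges G) e.
Definition nn (G : hgraph) : nat := size (hnodes G).
Definition ne (G : hgraph) : nat := size (hedges G).

Definition wf_graph (G : hgraph) : bool :=
  all (fun x => (esrc x < nn G) && (etgt x < nn G)) (hedges G).

(* Storage of the generated C code: per-mark node lists, root list,     *)
(* per node / edge mark / orientation incidence lists.  (Enumeration    *)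

Definition mark_list (G : hgraph) (k : nmark) : seq nat :=
  [seq v <- iota 0 (nn G) | nmark_eqb (nmk (nd G v)) k].
Definition root_list (G : hgraph) : seq nat :=
  [seq v <- iota 0 (nn G) | nroot (nd G v)].
Definition out_list (G : hgraph) (v : nat) (k : emark) : seq nat :=
  [seq e <- iota 0 (ne G) | [&& esrc (ed G e) == v, etgt (ed G e) != v
                              & emark_eqb (emk (ed G e)) k]].
Definition in_list (G : hgraph) (v : nat) (k : emark) : seq nat :=
  [seq e <- iota 0 (ne G) | [&& etgt (ed G e) == v, esrc (ed G e) != v
                              & emark_eqb (emk (ed G e)) k]].

(* Iterating over a storage list: each fetch of a first/next element
   costs 1 (including the final fetch returning null); the body returns
   a possible match and its own cost. *)
Fixpoint search (A : Type) (l : seq nat) (f : nat -> option A * nat)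
  : option A * nat :=
  match l with
  | [::] => (None, 1)
  | x :: l' =>
      let '(r, c) := f x in
      match r with
      | Some a => (Some a, 1 + c)
      | None => let '(r', c') := search l' f in (r', 1 + c + c')
      end
  end.

(* Search plan for a rule with a root node 1 (marked according to pr),
   an edge of mark k between node 1 and node 2 (either direction), and a
   node 2 satisfying p: fetch roots, test mark, walk the incident edges
   of mark k (outgoing, then incoming); for each edge read the other
   endpoint, test the matched flag (injectivity), read mark / root. *)
Definition edge_search (G : hgraph) (r : nat) (k : emark) (p : hnode -> bool)
  : option (nat * nat * nat) * nat :=
  let body (out : bool) (e : nat) :=
    let w := if out then etgt (ed G e) else esrc (ed G e) in
    (if (w != r) && p (nd G w) then Some (r, w, e) else None, 4) in
  let '(r1, c1) := search (out_list G r k) (body true) in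
  match r1 with
  | Some x => (Some x, c1)
  | None => let '(r2, c2) := search (in_list G r k) (body false) in (r2, c1 + c2)
  end.

Definition root_edge_search (G : hgraph) (pr : hnode -> bool) (k : emark)
  (p : hnode -> bool) : option (nat * nat * nat) * nat :=
  search (root_list G) (fun r =>
    let '(res, c) := if pr (nd G r) then edge_search G r k p else (None, 0) in
    (res, 2 + c)).

Definition node_search (G : hgraph) (k : nmark) : option nat * nat :=
  search (mark_list G k) (fun v => (Some v, 2)).

Definition set_node (G : hgraph) (v : nat) (k : nmark) (rt : bool) : hgraph :=
  HGraph (set_nth dnode (hnodes G) v (HNode k rt (nlab (nd G v)))) (hedges G).
Definition set_edge (G : hgraph) (e : nat) (k : emark) : hgraph :=
  let x := ed G e in
  HGraph (hnodes G) (set_nth dedge (hedges G) e (HEdge (esrc x) (etgt x) k (elab x))).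

(* The rules of is-connected.  A non-root node of L may match any host  *)
(* node; root nodes of L must match roots.  Variables match any label.  *)

Inductive rname := R_init | R_match | R_next_edge | R_ignore | R_move | R_back.

Definition is_blue (x : hnode) : bool := nmark_eqb (nmk x) NBlue.
Definition is_grey (x : hnode) : bool := nmark_eqb (nmk x) NGrey.

(* Result: Some G' if the rule applied (graph after application), and the
   cost (matching cost + 1 for completing the application). *)
Definition try_rule (rl : rname) (G : hgraph) : option hgraph * nat :=
  match rl with
  | R_init =>
      let '(r, c) := node_search G NGrey in
      match r with Some v => (Some (set_node G v NBlue true), c + 1) | None => (None, c) end
  | R_match =>
      let '(r, c) := node_search G NGrey in
      match r with Some _ => (Some G, c + 1) | None => (None, c) end
  | R_next_edge =>
      let '(r, c) := root_edge_search G is_blue EUnmarked (fun _ => true) in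
      match r with
      | Some (_, _, e) => (Some (set_edge G e ERed), c + 1)
      | None => (None, c) end
  | R_ignore =>
      let '(r, c) := root_edge_search G is_blue ERed is_blue in
      match r with
      | Some (_, _, e) => (Some (set_edge G e EBlue), c + 1)
      | None => (None, c) end
  | R_move =>
      let '(r, c) := root_edge_search G is_blue ERed is_grey in
      match r with
      | Some (v1, v2, e) =>
          (Some (set_edge (set_node (set_node G v1 NBlue false) v2 NBlue true) e EDashed),
           c + 1)
      | None => (None, c) end
  | R_back =>
      (* blue node 1, blue root 2, dashed edge: 1 becomes root, 2 non-root,
         edge blue.  Search starts at the root (rule node 2). *)
      let '(r, c) := root_edge_search G is_blue EDashed is_blue in
      match r with
      | Some (v2, v1, e) =>
          (Some (set_edge (set_node (set_node G v1 NBlue true) v2 NBlue false) e EBlue),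
           c + 1)
      | None => (None, c) end
  end.

Inductive cmd :=
  | CCall of seq rname
  | CSeq of cmd & cmd
  | CLoop of cmd
  | CTry of cmd & cmd & cmd
  | CIf of cmd & cmd & cmd
  | CSkip | CFail | CBreak.

(* Outcomes carry the number of rule applications performed (the changes
   recorded by the compiled code, to be undone on backtracking). *)
Inductive outcome :=
  | OOk of hgraph & nat
  | OFail of nat
  | OBrk of hgraph & nat.

Definition add_changes (u : nat) (o : outcome) : outcome :=
  match o with
  | OOk G k => OOk G (u + k)
  | OFail k => OFail (u + k)
  | OBrk G k => OBrk G (u + k)
  end.

Fixpoint call (rs : seq rname) (G : hgraph) : outcome * nat :=
  match rs with
  | [::] => (OFail 0, 1)
  | rl :: rs' =>
      let '(r, c) := try_rule rl G in
      match r with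
      | Some G' => (OOk G' 1, 1 + c)
      | None => let '(o, c') := call rs' G in (o, c + c')
      end
  end.

(* Each command step costs 1; undoing u recorded changes
   when backtracking (failed loop body, failed try condition, condition
   of if) costs u. *)
Fixpoint eval (fuel : nat) (c : cmd) (G : hgraph) : option (outcome * nat) :=
  match fuel with
  | 0 => None
  | fuel'.+1 =>
    match c with
    | CCall rs => let '(o, k) := call rs G in Some (o, 1 + k)
    | CSkip => Some (OOk G 0, 1)
    | CFail => Some (OFail 0, 1)
    | CBreak => Some (OBrk G 0, 1)
    | CSeq P Q =>
        match eval fuel' P G with
        | Some (OOk G1 u1, c1) =>
            match eval fuel' Q G1 with
            | Some (o, c2) => Some (add_changes u1 o, 1 + c1 + c2)
            | None => None end
        | Some (o, c1) => Some (o, 1 + c1)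
        | None => None
        end
    | CLoop P =>
        match eval fuel' P G with
        | Some (OOk G1 u1, c1) =>
            match eval fuel' (CLoop P) G1 with
            | Some (o, c2) => Some (add_changes u1 o, 1 + c1 + c2)
            | None => None end
        | Some (OFail u, c1) => Some (OOk G 0, 1 + c1 + u)
        | Some (OBrk G1 u, c1) => Some (OOk G1 u, 1 + c1)
        | None => None
        end
    | CTry C P Q =>
        match eval fuel' C G with
        | Some (OOk G1 u1, c1) =>
            match eval fuel' P G1 with
            | Some (o, c2) => Some (add_changes u1 o, 1 + c1 + c2)
            | None => None end
        | Some (OFail u, c1) =>
            match eval fuel' Q G with
            | Some (o, c2) => Some (o, 1 + c1 + u + c2)
            | None => None end
        | Some (o, c1) => Some (o, 1 + c1)
        | None => None
        end
    | CIf C P Q =>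
        match eval fuel' C G with
        | Some (OOk _ u, c1) =>
            match eval fuel' P G with
            | Some (o, c2) => Some (o, 1 + c1 + u + c2)
            | None => None end
        | Some (OFail u, c1) =>
            match eval fuel' Q G with
            | Some (o, c2) => Some (o, 1 + c1 + u + c2)
            | None => None end
        | Some (o, c1) => Some (o, 1 + c1)
        | None => None
        end
    end
  end.

Definition FORWARD : cmd := CSeq (CCall [:: R_next_edge]) (CCall [:: R_move; R_ignore]).
Definition DFS : cmd := CSeq (CLoop FORWARD) (CTry (CCall [:: R_back]) CSkip CBreak).
Definition Check : cmd := CIf (CCall [:: R_match]) CFail CSkip.
Definition is_connected : cmd := CTry (CCall [:: R_init]) (CSeq (CLoop DFS) Check) CSkip.

Definition all_grey_unrooted_unmarked (G : hgraph) : bool :=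
  all (fun x => nmark_eqb (nmk x) NGrey && ~~ nroot x) (hnodes G) &&
  all (fun x => emark_eqb (emk x) EUnmarked) (hedges G).

(* Main.v *)
Require Import Defs.
From mathcomp Require Import all_boot zify.

Set Implicit Arguments.
Unset Strict Implicit.
Arguments try_rule : simpl never.

Lemma emark_eqbP a b : emark_eqb a b -> a = b.
Proof. by case: a; case: b. Qed.

Lemma count_iota_nth T (x0 : T) (s : seq T) (q : pred T) :
  count (fun i => q (nth x0 s i)) (iota 0 (size s)) = count q s.
Proof. by rewrite -{3}(mkseq_nth x0 s) /mkseq count_map. Qed.

Lemma search_cost A (l : seq nat) (f : nat -> option A * nat) B :
  (forall x, x \in l -> (f x).2 <= B) ->
  (size l <= 1 \/ forall x, x \in l -> (f x).1 <> None) ->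
  (search l f).2 <= B + 2.
Proof.
case: l => [|x l] Hc Hs /=; first lia.
have := Hc x (mem_head _ _).
case E: (f x) => [r c] /= Hx.
case: r E => [a|] E /=; first lia.
case: Hs => [Hl | Hall]; last by have := Hall x (mem_head _ _); rewrite E.
case: l Hc Hl => [|//] _ _ /=. lia.
Qed.

Lemma search_some A l (f : nat -> option A * nat) a c :
  search l f = (Some a, c) -> exists2 x, x \in l & (f x).1 = Some a.
Proof.
elim: l c => [|x l IH] c //=.
case E: (f x) => [[b|] c1].
  by case=> <- _; exists x; rewrite ?mem_head ?E.
case E2: (search l f) => [r' c'] [Hr _]; subst r'.
have [y Hy Hf] := IH _ E2.
by exists y; rewrite // in_cons Hy orbT.
Qed.

Definition good (l : seq nat) (P : nat -> bool) := size l <= 1 \/ forall x, x \in l -> P x.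

Lemma edge_search_cost G r k p :
  good (out_list G r k) (fun e => p (nd G (etgt (ed G e)))) ->
  good (in_list G r k) (fun e => p (nd G (esrc (ed G e)))) ->
  (edge_search G r k p).2 <= 12.
Proof.
move=> H1 H2; rewrite /edge_search /=.
have mo : forall e, e \in out_list G r k -> (etgt (ed G e) != r).
  by move=> e; rewrite mem_filter => /andP[/and3P[]].
have mi : forall e, e \in in_list G r k -> (esrc (ed G e) != r).
  by move=> e; rewrite mem_filter => /andP[/and3P[]].
have K1 := @search_cost _ (out_list G r k) (fun e => (if (etgt (ed G e) != r) && p (nd G (etgt (ed G e))) then Some (r, etgt (ed G e), e) else None, 4)) 4 (fun _ _ => leqnn 4).
have K2 := @search_cost _ (in_list G r k) (fun e => (if (esrc (ed G e) != r) && p (nd G (esrc (ed G e))) then Some (r, esrc (ed G e), e) else None, 4)) 4 (fun _ _ => leqnn 4).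
have {K1} K1 : (search (out_list G r k) (fun e => (if (etgt (ed G e) != r) && p (nd G (etgt (ed G e))) then Some (r, etgt (ed G e), e) else None, 4))).2 <= 6.
  apply: K1; case: H1 => [H|H]; [by left | right => x Hx /=].
  by rewrite mo // H.
have {K2} K2 : (search (in_list G r k) (fun e => (if (esrc (ed G e) != r) && p (nd G (esrc (ed G e))) then Some (r, esrc (ed G e), e) else None, 4))).2 <= 6.
  apply: K2; case: H2 => [H|H]; [by left | right => x Hx /=].
  by rewrite mi // H.
case: (search (out_list G r k) _) K1 => [[x|] c1] /= K1; first lia.
case: (search (in_list G r k) _) K2 => [r2 c2] /= K2; lia.
Qed.

Lemma root_list_size G : size (root_list G) = count nroot (hnodes G).
Proof. by rewrite size_filter /nd /nn count_iota_nth. Qed.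

Lemma mem_root_list G r : r \in root_list G -> r < nn G /\ nroot (nd G r).
Proof. by rewrite mem_filter mem_iota => /andP[-> /andP[_ ->]]. Qed.

Lemma root_edge_search_cost G pr k p :
  count nroot (hnodes G) <= 1 ->
  (forall r, r \in root_list G ->
     good (out_list G r k) (fun e => p (nd G (etgt (ed G e)))) /\
     good (in_list G r k) (fun e => p (nd G (esrc (ed G e))))) ->
  (root_edge_search G pr k p).2 <= 16.
Proof.
move=> Hr Hg; rewrite /root_edge_search.
apply: (@search_cost _ _ _ 14); last by left; rewrite root_list_size.
move=> x Hx; case: (pr (nd G x)) => //=.
have [A B] := Hg x Hx.
have := edge_search_cost A B.
case: (edge_search G x k p) => [a c] /=; lia.
Qed.

Lemma node_search_cost G k : (node_search G k).2 <= 4.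
Proof. by rewrite /node_search; apply: (@search_cost _ _ _ 2) => //; right. Qed.

Lemma node_search_spec G k v c : node_search G k = (Some v, c) ->
  v < nn G /\ nmark_eqb (nmk (nd G v)) k.
Proof.
rewrite /node_search => /(@search_some nat) [x]; rewrite mem_filter mem_iota => /andP[H1 /andP[_ H2]] [<-].
by [].
Qed.

Lemma edge_search_spec G r0 k p r w e c :
  edge_search G r0 k p = (Some (r, w, e), c) ->
  [/\ r = r0, w != r0, p (nd G w), e < ne G & emark_eqb (emk (ed G e)) k /\
     (((esrc (ed G e) == r0) && (etgt (ed G e) == w)) ||
      ((etgt (ed G e) == r0) && (esrc (ed G e) == w)))].
Proof.
rewrite /edge_search /=.
case E1: (search (out_list G r0 k) _) => [[y|] c1].
  case=> ?; subst y.
  have [x Hx] := search_some E1; rewrite /=.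
  case: ifP => // /andP[Hne Hp] [<- <- <-].
  move: Hx; rewrite mem_filter mem_iota => /andP[/and3P[Hs _ Hk] /andP[_ Hlt]].
  by split => //; split => //; rewrite Hs eqxx.
case E2: (search (in_list G r0 k) _) => [[y|] c2] //.
case=> ?; subst y.
have [x Hx] := search_some E2; rewrite /=.
case: ifP => // /andP[Hne Hp] [<- <- <-].
move: Hx; rewrite mem_filter mem_iota => /andP[/and3P[Hs _ Hk] /andP[_ Hlt]].
by split => //; split => //; rewrite Hs eqxx orbT.
Qed.

Lemma res_spec G pr k p r w e c :
  root_edge_search G pr k p = (Some (r, w, e), c) ->
  [/\ r < nn G, nroot (nd G r), pr (nd G r), w != r &
    [/\ p (nd G w), e < ne G, emark_eqb (emk (ed G e)) k &
     (((esrc (ed G e) == r) && (etgt (ed G e) == w)) ||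
      ((etgt (ed G e) == r) && (esrc (ed G e) == w)))]].
Proof.
rewrite /root_edge_search => /(@search_some (nat * nat * nat)) [r0 Hr0] /=.
have [Hlt Hroot] := mem_root_list Hr0.
case Hpr: (pr (nd G r0)) => //.
case E: (edge_search G r0 k p) => [[y|] c0] //= [?]; subst y.
have [-> H1 H2 H3 [H4 H5]] := edge_search_spec E.
by split.
Qed.

Definition cnt_e G k := count (fun x => emark_eqb (emk x) k) (hedges G).
Definition phi G := 2 * cnt_e G EUnmarked + cnt_e G EDashed.
Definition dblue G := forall e, e < ne G -> emark_eqb (emk (ed G e)) EDashed ->
  is_blue (nd G (esrc (ed G e))) && is_blue (nd G (etgt (ed G e))).
Definition Inv_w G := [/\ wf_graph G, count nroot (hnodes G) <= 1,
  cnt_e G ERed <= 1 & dblue G].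
Definition Inv_s G := Inv_w G /\ cnt_e G ERed = 0.

Lemma wfP G e : wf_graph G -> e < ne G -> esrc (ed G e) < nn G /\ etgt (ed G e) < nn G.
Proof.
move=> /(all_nthP dedge) H He; have := H e He.
by move=> /andP[].
Qed.

Lemma nn_set_node G v k rt : v < nn G -> nn (set_node G v k rt) = nn G.
Proof. by move=> H; rewrite /nn /= size_set_nth; apply/maxn_idPr. Qed.

Lemma nd_set_node G v k rt u : nd (set_node G v k rt) u =
  if u == v then HNode k rt (nlab (nd G v)) else nd G u.
Proof. by rewrite /nd /= nth_set_nth. Qed.

Lemma nth_le_count T (x0 : T) (s : seq T) (p : pred T) i : i < size s ->
  p (nth x0 s i) <= count p s.
Proof.
elim: s i => [|x s IH] [|i] //= Hi; first lia.
have := IH i Hi; lia.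
Qed.

Lemma roots_set_node G v k rt : v < nn G ->
  count nroot (hnodes (set_node G v k rt)) + nroot (nd G v) = count nroot (hnodes G) + rt.
Proof.
move=> H; rewrite /= count_set_nth_ltn //= /nd.
have : nroot (nth dnode (hnodes G) v) <= count nroot (hnodes G).
  exact: nth_le_count.
lia.
Qed.

Lemma wf_set_node G v k rt : v < nn G -> wf_graph G -> wf_graph (set_node G v k rt).
Proof. by move=> H; rewrite /wf_graph nn_set_node. Qed.

Lemma dblue_set_node G v rt : dblue G -> dblue (set_node G v NBlue rt).
Proof.
move=> H e He Hd; have := H e He Hd.
move=> /andP[A B]; rewrite !nd_set_node; apply/andP; split; by case: ifP.
Qed.

Lemma ne_set_edge G e k : e < ne G -> ne (set_edge G e k) = ne G.
Proof. by move=> H; rewrite /ne /= size_set_nth; apply/maxn_idPr. Qed.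

Lemma ed_set_edge G e k e' : ed (set_edge G e k) e' =
  if e' == e then HEdge (esrc (ed G e)) (etgt (ed G e)) k (elab (ed G e)) else ed G e'.
Proof. by rewrite /ed /= nth_set_nth. Qed.

Lemma cnt_set_edge G e k q : e < ne G ->
  cnt_e (set_edge G e k) q + emark_eqb (emk (ed G e)) q = cnt_e G q + emark_eqb k q.
Proof.
move=> H; rewrite /cnt_e /= count_set_nth_ltn //= /ed.
have : emark_eqb (emk (nth dedge (hedges G) e)) q <= count (fun x => emark_eqb (emk x) q) (hedges G).
  exact: nth_le_count.
lia.
Qed.

Lemma wf_set_edge G e k : e < ne G -> wf_graph G -> wf_graph (set_edge G e k).
Proof.
move=> He /(all_nthP dedge) H; apply/(all_nthP dedge) => i.
rewrite /= size_set_nth (maxn_idPr He) nth_set_nth /=.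
move=> Hi; case: ifP => [/eqP Ei|_]; last exact: H.
rewrite /=; exact: H.
Qed.

Lemma dblue_set_edge G e k : e < ne G -> dblue G ->
  (emark_eqb k EDashed -> is_blue (nd G (esrc (ed G e))) && is_blue (nd G (etgt (ed G e)))) ->
  dblue (set_edge G e k).
Proof.
move=> He H Hk e'; rewrite ne_set_edge // ed_set_edge.
case: ifP => [/eqP -> | _] /= He' Hd; first exact: Hk.
exact: H.
Qed.

Lemma out_size G r k : size (out_list G r k) <= cnt_e G k.
Proof.
rewrite size_filter /cnt_e -(count_iota_nth dedge) -/(ne G).
by apply: sub_count => x /and3P[].
Qed.

Lemma in_size G r k : size (in_list G r k) <= cnt_e G k.
Proof.
rewrite size_filter /cnt_e -(count_iota_nth dedge) -/(ne G).
by apply: sub_count => x /and3P[].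
Qed.

Lemma mem_out G r k e : e \in out_list G r k -> e < ne G /\ emark_eqb (emk (ed G e)) k.
Proof. by rewrite mem_filter mem_iota => /andP[/and3P[_ _ ->] /andP[_ ->]]. Qed.
Lemma mem_in G r k e : e \in in_list G r k -> e < ne G /\ emark_eqb (emk (ed G e)) k.
Proof. by rewrite mem_filter mem_iota => /andP[/and3P[_ _ ->] /andP[_ ->]]. Qed.

Lemma try_rule_cost rl G : Inv_w G -> (try_rule rl G).2 <= 17.
Proof.
case=> Hwf Hr Hred Hdb.
have red_good : forall r, r \in root_list G ->
  good (out_list G r ERed) (fun e => is_blue (nd G (etgt (ed G e)))) /\
  good (in_list G r ERed) (fun e => is_blue (nd G (esrc (ed G e)))).
  move=> r _; split; left; [have := out_size G r ERed | have := in_size G r ERed]; lia.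
have red_good' : forall r, r \in root_list G ->
  good (out_list G r ERed) (fun e => is_grey (nd G (etgt (ed G e)))) /\
  good (in_list G r ERed) (fun e => is_grey (nd G (esrc (ed G e)))).
  move=> r _; split; left; [have := out_size G r ERed | have := in_size G r ERed]; lia.
case: rl; rewrite /try_rule.
- have := node_search_cost G NGrey; case: (node_search G NGrey) => [[v|] c] /=; lia.
- have := node_search_cost G NGrey; case: (node_search G NGrey) => [[v|] c] /=; lia.
- have := @root_edge_search_cost G is_blue EUnmarked (fun _ => true) Hr.
  case: (root_edge_search G _ _ _) => [[[[a b] x]|] c] /= H; (suff: c <= 16 by lia);
  by apply: H => r _; split; right.
- have := @root_edge_search_cost G is_blue ERed is_blue Hr.
  case: (root_edge_search G _ _ _) => [[[[a b] x]|] c] /= H; (suff: c <= 16 by lia);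
  exact: H.
- have := @root_edge_search_cost G is_blue ERed is_grey Hr.
  case: (root_edge_search G _ _ _) => [[[[a b] x]|] c] /= H; (suff: c <= 16 by lia);
  exact: H.
- have := @root_edge_search_cost G is_blue EDashed is_blue Hr.
  case: (root_edge_search G _ _ _) => [[[[a b] x]|] c] /= H; (suff: c <= 16 by lia);
  (apply: H => r _; split; right => e He;
  [ by have [Hlt Hd] := mem_out He; case/andP: (Hdb e Hlt Hd)
  | by have [Hlt Hd] := mem_in He; case/andP: (Hdb e Hlt Hd)]).
Qed.

Lemma ed_sn G v k rt e : ed (set_node G v k rt) e = ed G e.
Proof. by []. Qed.
Lemma cnt_sn G v k rt q : cnt_e (set_node G v k rt) q = cnt_e G q.
Proof. by []. Qed.
Lemma ne_sn G v k rt : ne (set_node G v k rt) = ne G.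
Proof. by []. Qed.
Lemma roots_se G e k : count nroot (hnodes (set_edge G e k)) = count nroot (hnodes G).
Proof. by []. Qed.
Lemma nd_se G e k v : nd (set_edge G e k) v = nd G v.
Proof. by []. Qed.

Lemma ends_lt G r w e : wf_graph G -> e < ne G ->
  ((esrc (ed G e) == r) && (etgt (ed G e) == w)) ||
  ((etgt (ed G e) == r) && (esrc (ed G e) == w)) -> w < nn G.
Proof.
move=> Hwf He; have [A B] := wfP Hwf He.
by case/orP => /andP[_ /eqP <-].
Qed.

Lemma next_edge_eff G G1 c : Inv_s G -> try_rule R_next_edge G = (Some G1, c) ->
  [/\ Inv_w G1, cnt_e G1 ERed = 1, cnt_e G1 EUnmarked + 1 = cnt_e G EUnmarked
    & cnt_e G1 EDashed = cnt_e G EDashed].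
Proof.
case=> [[Hwf Hr Hred Hdb] H0]; rewrite /try_rule.
case E: (root_edge_search _ _ _ _) => [[[[a b] e]|] c0] //= [<- _].
have [_ _ _ _ [_ He Hk _]] := res_spec E.
move/emark_eqbP: Hk => Hk.
have C1 := cnt_set_edge ERed ERed He.
have C2 := cnt_set_edge ERed EUnmarked He.
have C3 := cnt_set_edge ERed EDashed He.
rewrite Hk /= in C1 C2 C3.
split; try lia.
split => //.
- exact: wf_set_edge.
- lia.
- by apply: dblue_set_edge.
Qed.

Lemma move_eff G1 G2 c : Inv_w G1 -> cnt_e G1 ERed = 1 ->
  try_rule R_move G1 = (Some G2, c) ->
  [/\ Inv_s G2, cnt_e G2 EUnmarked = cnt_e G1 EUnmarked
    & cnt_e G2 EDashed = (cnt_e G1 EDashed).+1].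
Proof.
case=> Hwf Hr Hred Hdb H1r; rewrite /try_rule.
case E: (root_edge_search _ _ _ _) => [[[[r w] e]|] c0] //= [<- _].
have [Hrn Hroot Hbr Hwr [Hg He Hk Hends]] := res_spec E.
have Hwn := ends_lt Hwf He Hends.
move/emark_eqbP: Hk => Hk.
have Hwn1 : w < nn (set_node G1 r NBlue false) by rewrite nn_set_node.
have R1 := roots_set_node NBlue false Hrn.
have R2 := roots_set_node NBlue true Hwn1.
rewrite Hroot in R1.
have He2 : e < ne (set_node (set_node G1 r NBlue false) w NBlue true) by [].
have C1 := cnt_set_edge EDashed ERed He2.
have C2 := cnt_set_edge EDashed EUnmarked He2.
have C3 := cnt_set_edge EDashed EDashed He2.
rewrite !ed_sn !cnt_sn Hk /= in C1 C2 C3.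
split; try lia.
split; last lia.
split.
- apply: wf_set_edge => //; apply: wf_set_node => //; exact: wf_set_node.
- rewrite roots_se; lia.
- lia.
- apply: dblue_set_edge => //; first by do 2 apply: dblue_set_node.
  move=> _.
  have Br : is_blue (nd (set_node (set_node G1 r NBlue false) w NBlue true) r)
    by rewrite !nd_set_node eqxx; case: ifP.
  have Bw : is_blue (nd (set_node (set_node G1 r NBlue false) w NBlue true) w)
    by rewrite !nd_set_node eqxx.
  rewrite !ed_sn.
  by case/orP: Hends => /andP[/eqP -> /eqP ->]; rewrite Br Bw.
Qed.

Lemma ignore_eff G1 G2 c : Inv_w G1 -> cnt_e G1 ERed = 1 ->
  try_rule R_ignore G1 = (Some G2, c) ->
  [/\ Inv_s G2, cnt_e G2 EUnmarked = cnt_e G1 EUnmarked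
    & cnt_e G2 EDashed = cnt_e G1 EDashed].
Proof.
case=> Hwf Hr Hred Hdb H1r; rewrite /try_rule.
case E: (root_edge_search _ _ _ _) => [[[[r w] e]|] c0] //= [<- _].
have [Hrn Hroot Hbr Hwr [Hg He Hk Hends]] := res_spec E.
move/emark_eqbP: Hk => Hk.
have C1 := cnt_set_edge EBlue ERed He.
have C2 := cnt_set_edge EBlue EUnmarked He.
have C3 := cnt_set_edge EBlue EDashed He.
rewrite Hk /= in C1 C2 C3.
split; try lia.
split; last lia.
split.
- exact: wf_set_edge.
- by rewrite roots_se.
- lia.
- by apply: dblue_set_edge.
Qed.

Lemma back_eff G G2 c : Inv_s G ->
  try_rule R_back G = (Some G2, c) ->
  [/\ Inv_s G2, cnt_e G2 EUnmarked = cnt_e G EUnmarked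
    & (cnt_e G2 EDashed).+1 = cnt_e G EDashed].
Proof.
case=> [[Hwf Hr Hred Hdb] H0]; rewrite /try_rule.
case E: (root_edge_search _ _ _ _) => [[[[r w] e]|] c0] //= [<- _].
have [Hrn Hroot Hbr Hwr [Hg He Hk Hends]] := res_spec E.
have Hwn := ends_lt Hwf He Hends.
move/emark_eqbP: Hk => Hk.
have Hrn1 : r < nn (set_node G w NBlue true) by rewrite nn_set_node.
have R1 := roots_set_node NBlue true Hwn.
have R2 := roots_set_node NBlue false Hrn1.
have Hr1 : nroot (nd (set_node G w NBlue true) r) by rewrite nd_set_node eq_sym (negbTE Hwr).
rewrite Hr1 in R2.
have He2 : e < ne (set_node (set_node G w NBlue true) r NBlue false) by [].
have C1 := cnt_set_edge EBlue ERed He2.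
have C2 := cnt_set_edge EBlue EUnmarked He2.
have C3 := cnt_set_edge EBlue EDashed He2.
rewrite !ed_sn !cnt_sn Hk /= in C1 C2 C3.
split; try lia.
split; last lia.
split.
- apply: wf_set_edge => //; apply: wf_set_node => //; exact: wf_set_node.
- rewrite roots_se; lia.
- lia.
- apply: dblue_set_edge => //; by do 2 apply: dblue_set_node.
Qed.

Lemma eval_mono f f' c G r : f <= f' -> eval f c G = Some r -> eval f' c G = Some r.
Proof.
elim: f f' c G r => [|f IH] [|f'] c G r //= Hle.
case: c => [rs|P Q|P|C P Q|C P Q| | |] //=.
- case E: (eval f P G) => [[[G1 u1|u|G1 u] c1]|] //; rewrite (IH _ _ _ _ Hle E) //.
  case E2: (eval f Q G1) => [y|] //; by rewrite (IH _ _ _ _ Hle E2).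
- case E: (eval f P G) => [[[G1 u1|u|G1 u] c1]|] //; rewrite (IH _ _ _ _ Hle E) //.
  case E2: (eval f (CLoop P) G1) => [y|] //; by rewrite (IH _ _ _ _ Hle E2).
- case E: (eval f C G) => [[[G1 u1|u|G1 u] c1]|] //; rewrite (IH _ _ _ _ Hle E) //.
  + case E2: (eval f P G1) => [y|] //; by rewrite (IH _ _ _ _ Hle E2).
  + case E2: (eval f Q G) => [y|] //; by rewrite (IH _ _ _ _ Hle E2).
- case E: (eval f C G) => [[[G1 u1|u|G1 u] c1]|] //; rewrite (IH _ _ _ _ Hle E) //.
  + case E2: (eval f P G) => [y|] //; by rewrite (IH _ _ _ _ Hle E2).
  + case E2: (eval f Q G) => [y|] //; by rewrite (IH _ _ _ _ Hle E2).
Qed.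

Lemma fw_step G : Inv_s G -> exists o t, eval 2 FORWARD G = Some (o, t) /\ t <= 60 /\
  ((exists u, o = OFail u /\ u <= 1) \/
   (exists G' u, o = OOk G' u /\ Inv_s G' /\ phi G' < phi G)).
Proof.
move=> Hs; have Hw : Inv_w G by case: Hs.
rewrite /FORWARD /=.
have K1 := try_rule_cost R_next_edge Hw.
case E1: (try_rule R_next_edge G) K1 => [[G1|] c1] /= K1; last first.
  by do 2 eexists; split; first reflexivity; split; [lia | left; eexists].
have [Hw1 Hr1 HU HD] := next_edge_eff Hs E1.
have K2 := try_rule_cost R_move Hw1.
have K3 := try_rule_cost R_ignore Hw1.
case E2: (try_rule R_move G1) K2 => [[G2|] c2] /= K2.
  have [Hs2 HU2 HD2] := move_eff Hw1 Hr1 E2.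
  do 2 eexists; split; first reflexivity; split; first lia.
  right; do 2 eexists; split; first reflexivity; split => //.
  rewrite /phi; lia.
case E3: (try_rule R_ignore G1) K3 => [[G3|] c3] /= K3.
  have [Hs3 HU3 HD3] := ignore_eff Hw1 Hr1 E3.
  do 2 eexists; split; first reflexivity; split; first lia.
  right; do 2 eexists; split; first reflexivity; split => //.
  rewrite /phi; lia.
do 2 eexists; split; first reflexivity; split; first lia.
by left; eexists.
Qed.

Lemma eval_loopS f P G : eval f.+1 (CLoop P) G =
    match eval f P G with
    | Some (OOk G1 u1, c1) =>
        match eval f (CLoop P) G1 with
        | Some (o, c2) => Some (add_changes u1 o, 1 + c1 + c2)
        | None => None end
    | Some (OFail u, c1) => Some (OOk G 0, 1 + c1 + u)
    | Some (OBrk G1 u, c1) => Some (OOk G1 u, 1 + c1)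
    | None => None
    end.
Proof. by []. Qed.

Lemma eval_seqS f P Q G : eval f.+1 (CSeq P Q) G =
        match eval f P G with
        | Some (OOk G1 u1, c1) =>
            match eval f Q G1 with
            | Some (o, c2) => Some (add_changes u1 o, 1 + c1 + c2)
            | None => None end
        | Some (o, c1) => Some (o, 1 + c1)
        | None => None
        end.
Proof. by []. Qed.

Lemma fw_loop n G : phi G <= n -> Inv_s G -> exists f G' u t,
  eval f (CLoop FORWARD) G = Some (OOk G' u, t) /\ Inv_s G' /\
  t + 100 * phi G' <= 100 * phi G + 100 /\ phi G' <= phi G.
Proof.
elim: n G => [|n IH] G Hn Hs;
have [o [t [E [Ht [[u [Ho Hu]] | [G' [u [Ho [Hs' Hp]]]]]]]]] := fw_step Hs; subst o.
- exists 3, G, 0, (1 + t + u); split; last by split => //; lia.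
  by rewrite eval_loopS E.
- lia.
- exists 3, G, 0, (1 + t + u); split; last by split => //; lia.
  by rewrite eval_loopS E.
- have [f1 [G'' [u' [t' [E' [Hs'' [Ht' Hp']]]]]]] := IH G' (ltac:(lia)) Hs'.
  exists (maxn 2 f1).+1, G'', (u + u'), (1 + t + t'); split; last by split => //; split; lia.
  rewrite eval_loopS (eval_mono (leq_maxl 2 f1) E).
  by rewrite (eval_mono (leq_maxr 2 f1) E').
Qed.

Definition TRYBACK := CTry (CCall [:: R_back]) CSkip CBreak.

Lemma back_step G : Inv_s G -> exists o t, eval 3 TRYBACK G = Some (o, t) /\ t <= 30 /\
  (o = OBrk G 0 \/ exists G' u, o = OOk G' u /\ Inv_s G' /\ phi G' < phi G).
Proof.
move=> Hs; have Hw : Inv_w G by case: Hs.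
rewrite /TRYBACK /=.
have K1 := try_rule_cost R_back Hw.
case E1: (try_rule R_back G) K1 => [[G1|] c1] /= K1.
  have [Hs1 HU HD] := back_eff Hs E1.
  do 2 eexists; split; first reflexivity; split; first lia.
  right; do 2 eexists; split; first reflexivity; split => //.
  rewrite /phi; lia.
do 2 eexists; split; first reflexivity; split; first lia.
by left.
Qed.

Lemma dfs_step G : Inv_s G -> exists f o t, eval f DFS G = Some (o, t) /\
  ((exists G' u, o = OBrk G' u /\ t <= 100 * phi G + 200) \/
   (exists G' u, o = OOk G' u /\ Inv_s G' /\ phi G' < phi G /\
      t + 100 * phi G' <= 100 * phi G + 200)).
Proof.
move=> Hs.
have [f1 [G1 [u1 [t1 [E1 [Hs1 [Ht1 Hp1]]]]]]] := fw_loop (leqnn _) Hs.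
have [o [t [E [Ht [Ho | [G' [u [Ho [Hs' Hp]]]]]]]]] := back_step Hs1; subst o.
- exists (maxn 3 f1).+1, (OBrk G1 (u1 + 0)), (1 + t1 + t); split.
    rewrite /DFS eval_seqS (eval_mono (leq_maxr 3 f1) E1) -/TRYBACK.
    by rewrite (eval_mono (leq_maxl 3 f1) E).
  left; do 2 eexists; split; first reflexivity; lia.
- exists (maxn 3 f1).+1, (OOk G' (u1 + u)), (1 + t1 + t); split.
    rewrite /DFS eval_seqS (eval_mono (leq_maxr 3 f1) E1) -/TRYBACK.
    by rewrite (eval_mono (leq_maxl 3 f1) E).
  right; do 2 eexists; split; first reflexivity; split => //; split; lia.
Qed.

Lemma dfs_loop n G : phi G <= n -> Inv_s G -> exists f G' u t,
  eval f (CLoop DFS) G = Some (OOk G' u, t) /\ t <= 301 * phi G + 201.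
Proof.
elim: n G => [|n IH] G Hn Hs;
have [f [o [t [E [[G' [u [Ho Ht]]] | [G' [u [Ho [Hs' [Hp Ht]]]]]]]]]] := dfs_step Hs; subst o.
- exists f.+1, G', u, (1 + t); split; last lia.
  by rewrite eval_loopS E.
- lia.
- exists f.+1, G', u, (1 + t); split; last lia.
  by rewrite eval_loopS E.
- have [f1 [G'' [u' [t' [E' Ht']]]]] := IH G' (ltac:(lia)) Hs'.
  exists (maxn f f1).+1, G'', (u + u'), (1 + t + t'); split; last lia.
  rewrite eval_loopS (eval_mono (leq_maxl f f1) E).
  by rewrite (eval_mono (leq_maxr f f1) E').
Qed.

Lemma eval_tryS f C P Q G : eval f.+1 (CTry C P Q) G =
        match eval f C G with
        | Some (OOk G1 u1, c1) =>
            match eval f P G1 with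
            | Some (o, c2) => Some (add_changes u1 o, 1 + c1 + c2)
            | None => None end
        | Some (OFail u, c1) =>
            match eval f Q G with
            | Some (o, c2) => Some (o, 1 + c1 + u + c2)
            | None => None end
        | Some (o, c1) => Some (o, 1 + c1)
        | None => None
        end.
Proof. by []. Qed.

Lemma eval_call1 f rl G : eval f.+1 (CCall [:: rl]) G =
  match try_rule rl G with
  | (Some G', c) => Some (OOk G' 1, 1 + (1 + c))
  | (None, c) => Some (OFail 0, 1 + (c + 1))
  end.
Proof. by rewrite /=; case: (try_rule rl G) => [[?|] ?]. Qed.

Lemma check_cost G : exists o t, eval 3 Check G = Some (o, t) /\ t <= 20.
Proof.
rewrite /Check /=.
have : (try_rule R_match G).2 <= 5.
  rewrite /try_rule; have := node_search_cost G NGrey.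
  case: (node_search G NGrey) => [[?|] ?] /=; lia.
case: (try_rule R_match G) => [[?|] c] /= H; do 2 eexists; (split; first reflexivity); lia.
Qed.

Lemma init_eff G G1 c : try_rule R_init G = (Some G1, c) ->
  exists v, [/\ v < nn G, G1 = set_node G v NBlue true & c <= 5].
Proof.
rewrite /try_rule; have := node_search_cost G NGrey.
case E: (node_search G NGrey) => [[v|] c0] //= Hc [<- <-].
have [Hv _] := node_search_spec E.
exists v; split => //; lia.
Qed.

Lemma init_cost G c : try_rule R_init G = (None, c) -> c <= 5.
Proof.
rewrite /try_rule; have := node_search_cost G NGrey.
by case E: (node_search G NGrey) => [[v|] c0] //= Hc [Hce]; lia.
Qed.

Lemma count0 T (p : pred T) s : all (fun x => ~~ p x) s -> count p s = 0.
Proof. elim: s => //= x s IH /andP[H1 H2]; by rewrite IH // (negbTE H1). Qed.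

Lemma cnt_le G k : cnt_e G k <= ne G.
Proof. exact: count_size. Qed.

Theorem mainTheorem2 :
  exists c : nat, forall G : hgraph,
    wf_graph G -> all_grey_unrooted_unmarked G ->
    exists (fuel : nat) (o : outcome) (t : nat),
      eval fuel is_connected G = Some (o, t) /\ t <= c * (nn G + ne G + 1).
Proof.
exists 1000 => G Hwf /andP[Hn He].
case E: (try_rule R_init G) => [[G1|] c1]; last first.
  have Hc := init_cost E.
  exists 2, (OOk G 0), (1 + (1 + (c1 + 1)) + 0 + 1); split; last lia.
  by rewrite /is_connected /= E.
have [v [Hv HG1 Hc]] := init_eff E; subst G1.
have Hr0 : count nroot (hnodes G) = 0.
  by apply: count0; apply: sub_all Hn => x /andP[].
have Hred0 : cnt_e G ERed = 0.
  apply: count0; apply: sub_all He => x /emark_eqbP ->; done.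
have Hdb : dblue G.
  move=> e Hlt; move/(all_nthP dedge): He => He.
  by move: (He e Hlt) => /emark_eqbP; rewrite /ed => ->.
have Hs1 : Inv_s (set_node G v NBlue true).
  split => //; split => //.
  - exact: wf_set_node.
  - have := roots_set_node NBlue true Hv; lia.
  - by rewrite cnt_sn Hred0.
  - exact: dblue_set_node.
have [f [G' [u [t [E1 Ht]]]]] := dfs_loop (leqnn _) Hs1.
have [o2 [t2 [E2 Ht2]]] := check_cost G'.
exists (maxn 3 f).+2, (add_changes 1 (add_changes u o2)),
  (1 + (1 + (1 + c1)) + (1 + t + t2)); split.
  rewrite /is_connected eval_tryS eval_call1 E eval_seqS.
  rewrite (eval_mono (leq_maxr 3 f) E1).
  by rewrite (eval_mono (leq_maxl 3 f) E2).
have := cnt_le G EUnmarked; have := cnt_le G EDashed.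
move: Ht; rewrite /phi !cnt_sn; lia.
Qed.
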